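(* There does not exist a $5$-qubit UPB of size $7$.
   Context: A product state in $(\mathbb{C}^2)^{\otimes p}$ is a vector $|v_1\rangle\otimes\cdots\otimes|v_p\rangle$ with each $|v_j\rangle\in\mathbb{C}^2$. A $p$-qubit unextendible product basis (UPB) is a finite set $\mathcal{S}\subseteq(\mathbb{C}^2)^{\otimes p}$ of unit product vectors that are pairwise orthogonal, such that no nonzero product vector outside $\mathcal{S}$ is orthogonal to every element of $\mathcal{S}$; its size is its number of elements. *)

(* Defs.v *)
(* Complex scalars: an arbitrary numClosedFieldType
   (algebraically closed field with conjugation; C is the model). *)
From HB Require Import structures.
From mathcomp Require Import all_boot all_order all_algebra.
Set Implicit Arguments. Unset Strict Implicit. Unset Printing Implicit Defensive.
Import Order.TTheory GRing.Theory Num.Theory.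
Local Open Scope ring_scope.

(* Computational basis of (C^2)^{(x)p}: bit strings x : 'I_p -> 'I_2.
   A vector of (C^2)^{(x)p} is its coordinate function. *)
Definition qvec (R : numClosedFieldType) (p : nat) :=
  {ffun {ffun 'I_p -> 'I_2} -> R}.

(* |v_1> (x) ... (x) |v_p>, with v j : C^2 given by its two coordinates *)
Definition prodvec (R : numClosedFieldType) (p : nat) (v : 'I_p -> 'I_2 -> R)
  : qvec R p := [ffun x : {ffun 'I_p -> 'I_2} => \prod_(j < p) v j (x j)].

Definition is_product (R : numClosedFieldType) (p : nat) (t : qvec R p) : Prop :=
  exists v : 'I_p -> 'I_2 -> R, t = prodvec v.

Definition inner (R : numClosedFieldType) (p : nat) (t u : qvec R p) : R :=
  \sum_x (t x)^* * u x.

(* S : seq listing the elements of the finite set (no repetitions) *)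
Definition is_UPB (R : numClosedFieldType) (p : nat) (S : seq (qvec R p)) : Prop :=
  [/\ uniq S,
      (forall s, s \in S -> is_product s /\ inner s s = 1),
      (forall s t, s \in S -> t \in S -> s != t -> inner s t = 0) &
      (forall t, is_product t -> t != 0 -> t \notin S ->
          ~ (forall s, s \in S -> inner s t = 0))].

(* Main.v *)
Require Import Defs.
From HB Require Import structures.
From mathcomp Require Import all_boot all_order all_algebra.
From mathcomp Require Import ring zify.
Import Order.TTheory GRing.Theory Num.Theory.


Lemma PH (T U : finType) (A : {set T}) (B : {set U}) (f : T -> U) :
  {in A, forall x, f x \in B} -> (#|B| < #|A|)%N ->
  exists x y, [/\ x \in A, y \in A, x != y & f x = f y].
Proof.
move=> fAB ltBA.
case: (boolP [exists x in A, exists y in A, (x != y) && (f x == f y)]).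
  case/exists_inP => x xA /exists_inP [y yA /andP [nxy /eqP fxy]].
  by exists x, y.
move=> /exists_inPn H.
have inj : {in A &, injective f}.
  move=> x y xA yA fxy; apply/eqP; apply: contraT => nxy.
  have := H x xA; move/exists_inPn/(_ y yA). by rewrite nxy fxy eqxx.
have sub : [set f x | x in A] \subset B.
  by apply/subsetP => _ /imsetP [x xA ->]; exact: fAB.
have := subset_leq_card sub; rewrite (card_in_imset inj) => le.
by rewrite leqNgt ltBA in le.
Qed.

Arguments PH {T U A B f}.

Lemma card_notin (T : finType) (s : seq T) : #|[set x | x \notin s]| = #|T| - #|s|.
Proof.
rewrite -(cardC (mem s)) addKn; apply: eq_card => x; by rewrite !inE.
Qed.

Lemma outside (s : seq 'I_7) : (size s < 7)%N -> exists y, y \notin s.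
Proof.
move=> lt; case: (boolP [exists y, y \notin s]) => [/existsP//|/existsPn H].
have: (size (enum 'I_7) <= size s)%N.
  apply: uniq_leq_size (enum_uniq _) _ => y _; have := H y; by rewrite negbK.
by rewrite size_enum_ord leqNgt lt.
Qed.

Lemma uniq7 (s : seq 'I_7) : uniq s -> (size s <= 7)%N.
Proof. move=> u; rewrite -(card_uniqP u); apply: leq_trans (max_card _) _; by rewrite card_ord. Qed.

Lemma exhaust (s : seq 'I_7) y : uniq s -> size s = 7 -> y \in s.
Proof.
move=> u hs; apply: contraT => ny.
by have := @uniq7 (y::s); rewrite /= ny u hs => /(_ isT).
Qed.

Record CH (par orth : 'I_5 -> 'I_7 -> 'I_7 -> bool) : Prop := {
 par_refl : forall j a, par j a a;
 par_sym : forall j a b, par j a b -> par j b a;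
 orth_sym : forall j a b, orth j a b -> orth j b a;
 orth_par : forall j a b c, orth j a b -> orth j a c -> par j b c;
 par_orth : forall j a b c, par j b c -> orth j a b -> orth j a c;
 orth_npar : forall j a b, orth j a b -> ~~ par j a b;
 cover : forall a b, a != b -> exists j, orth j a b;
 notriple : forall j a b c, a != b -> a != c -> b != c -> par j a b -> par j a c -> False;
 nodisj : forall j j' a b c d, j != j' -> a != b -> c != d -> a != c -> a != d ->
    b != c -> b != d -> par j a b -> par j' c d -> False }.

Arguments par_refl {par orth} _ j a.
Arguments par_sym {par orth} _ {j a b}.
Arguments orth_sym {par orth} _ {j a b}.
Arguments orth_par {par orth} _ {j a b c}.
Arguments par_orth {par orth} _ {j a b c}.
Arguments orth_npar {par orth} _ {j a b}.
Arguments cover {par orth} _ {a b}.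
Arguments notriple {par orth} _ {j a b c}.
Arguments nodisj {par orth} _ {j j' a b c d}.

Ltac split_ands := repeat match goal with H : is_true (_ && _) |- _ => case/andP: H => ? ? end.
Ltac ne := solve [ assumption | rewrite eq_sym; assumption ].
Ltac uniqH U := move: U => /=; rewrite ?inE ?negb_or => U; split_ands.

Section C.
Variables (par orth : 'I_5 -> 'I_7 -> 'I_7 -> bool) (H : CH par orth).

Lemma orth_ne {j a b} : orth j a b -> a != b.
Proof. move=> o; apply/eqP => e; subst; have := orth_npar H o; by rewrite (par_refl H). Qed.

Lemma cn {j x y z} : orth j x y -> orth j z y -> par j x z.
Proof. move=> o1 o2; apply: (orth_par H (orth_sym H o1) (orth_sym H o2)). Qed.

Lemma tri {j x y z} : par j x y -> par j x z -> x != y -> x != z -> y != z -> False.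
Proof. move=> p1 p2 n1 n2 n3; exact: (notriple H n1 n2 n3 p1 p2). Qed.

Lemma ND {j j' a b c d} : par j a b -> par j' c d -> j != j' -> a != b -> c != d ->
  a != c -> a != d -> b != c -> b != d -> False.
Proof. move=> p1 p2 n1 n2 n3 n4 n5 n6 n7; exact: (nodisj H n1 n2 n3 n4 n5 n6 n7 p1 p2). Qed.

Definition pf a b := odflt ord0 [pick j | orth j a b].
Lemma pfP a b : b != a -> orth (pf a b) a b.
Proof.
move=> nb; rewrite /pf; case: pickP => [j //|H0] /=.
have [j oj] : exists j, orth j a b by apply: (cover H); rewrite eq_sym. by rewrite H0 in oj.
Qed.

Lemma degA a : exists j b c, [/\ b != c, orth j a b & orth j a c].
Proof.
have [x [y [xA yA nxy fxy]]] :=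
  @PH _ _ [set~ a] [set: 'I_5] (pf a) (fun _ _ => in_setT _)
    ltac:(by rewrite cardsC1 cardsT !card_ord).
exists (pf a x), x, y; split => //; first by apply: pfP; rewrite -in_setC1.
by rewrite fxy; apply: pfP; rewrite -in_setC1.
Qed.

Lemma degG2 a j : exists d, orth j a d.
Proof.
have [j0 [b [c [nbc ob oc]]]] := degA a.
case: (eqVneq j j0) => [-> |njj0]; first by exists b.
case: (boolP [exists d, orth j a d]) => [/existsP //| /existsPn nod].
exfalso.
have fAB : {in [set x | x \notin [:: a; b; c]], forall x, pf a x \in [set i | i \notin [:: j; j0]]}.
  move=> x; rewrite !inE !negb_or => /and3P [xa xb xc].
  have ox := pfP a x xa.
  apply/andP; split.
    apply/eqP => e; have := nod x; by rewrite -e ox.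
  apply/eqP => e; rewrite e in ox.
  apply: (tri (orth_par H ob oc) (orth_par H ob ox) nbc); by rewrite eq_sym.
have card : (#|[set i | i \notin [:: j; j0]]| < #|[set x | x \notin [:: a; b; c]]|)%N.
  rewrite !card_notin !card_ord.
  have u2 : uniq [:: j; j0] by rewrite /= inE njj0.
  rewrite (card_uniqP u2) /=.
  have := card_size [:: a; b; c] => /= h.
  lia.
have [x [y [xA yA nxy fxy]]] := PH fAB card.
have xB := fAB x xA.
move: xA yA xB; rewrite !inE !negb_or => /and3P [xa xb xc] /and3P [ya yb yc] /andP [_ nj0].
have ox := pfP a x xa. have oy := pfP a y ya. rewrite -fxy in oy.
apply: (ND (orth_par H ox oy) (orth_par H ob oc)) => //; by rewrite eq_sym.
Qed.


Ltac expand_all := repeat match goal with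
 | h : is_true (uniq (_ :: _)) |- _ => rewrite /= in h
 | h : is_true (_ \notin (_ :: _)) |- _ => rewrite inE ?negb_or in h
 | h : is_true (_ \notin [::]) |- _ => clear h
 | h : is_true (uniq [::]) |- _ => clear h
 | h : is_true (_ && _) |- _ => case/andP: h => ? ?
end.
Ltac uniq_solve := rewrite /= ?inE ?negb_or ?andbT; repeat (apply/andP; split); ne.
Ltac notin_solve := rewrite ?inE ?negb_or ?andbT; repeat (apply/andP; split); ne.

Lemma twodisj {j p q r s} : uniq [:: p;q;r;s] -> par j p q -> par j r s -> False.
Proof.
move=> U hpq hrs.
have hqp := par_sym H hpq; have hsr := par_sym H hrs.
have U0 := U; expand_all.
have [e1 [e2 [z [U7 he]]]] : exists e1 e2 z, uniq [:: p;q;r;s;e1;e2;z] /\ par j e1 e2.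
{ case: (boolP (orth j p r)) => opr.
  - have ops : orth j p s := par_orth H hrs opr.
    have oqr : orth j q r := orth_sym H (par_orth H hpq (orth_sym H opr)).
    have oqs : orth j q s := par_orth H hrs oqr.
    have claim : forall y t, y \notin [:: p;q;r;s] -> orth j y t -> t \notin [:: p;q;r;s].
      move=> y t hy oyt; have hy0 := hy; expand_all.
      rewrite !inE; apply/negP; case/or4P => /eqP et; subst t.
      + apply: (tri hrs (par_sym H (cn oyt (orth_sym H opr)))); ne.
      + apply: (tri hrs (par_sym H (cn oyt (orth_sym H oqr)))); ne.
      + apply: (tri hpq (par_sym H (cn oyt opr))); ne.
      + apply: (tri hpq (par_sym H (cn oyt ops))); ne.
    have [w hw] := outside [:: p;q;r;s] isT.
    have [v ov] := degG2 w j.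
    have hv := claim w v hw ov.
    have nwv := orth_ne ov.
    have [u hu] := outside [:: p;q;r;s;w;v] isT.
    have hu' : u \notin [:: p;q;r;s].
      have hu0 := hu; expand_all; notin_solve.
    have [t ot] := degG2 u j.
    have ht := claim u t hu' ot.
    have nut := orth_ne ot.
    have hw0 := hw; have hv0 := hv; have hu0 := hu; have ht0 := ht; expand_all.
    case: (eqVneq t w) => [etw|ntw].
      subst t; exists u, v, w; split; first by uniq_solve.
      exact: (cn ot (orth_sym H ov)).
    case: (eqVneq t v) => [etv|ntv].
      subst t; exists u, w, v; split; first by uniq_solve.
      exact: (cn ot ov).
    exfalso; have : uniq [:: t;p;q;r;s;w;v;u] by uniq_solve.
    by move/uniq7.
  - have [w1 o1] := degG2 p j. have [w2 o2] := degG2 r j.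
    have h1 : w1 \notin [:: p;q;r;s].
      rewrite !inE !negb_or; apply/and4P; split; apply/eqP => e; subst w1.
      + by have := orth_ne o1; rewrite eqxx.
      + by have := orth_npar H o1; rewrite hpq.
      + by rewrite o1 in opr.
      + by rewrite (par_orth H hsr o1) in opr.
    have h2 : w2 \notin [:: p;q;r;s].
      rewrite !inE !negb_or; apply/and4P; split; apply/eqP => e; subst w2.
      + by rewrite (orth_sym H o2) in opr.
      + by rewrite (orth_sym H (par_orth H hqp o2)) in opr.
      + by have := orth_ne o2; rewrite eqxx.
      + by have := orth_npar H o2; rewrite hrs.
    have n12 : w1 != w2.
      apply/eqP => e; subst w2; apply: (tri hpq (cn o1 o2)); ne.
    have [u hu] := outside [:: p;q;r;s;w1;w2] isT.
    have [t ot] := degG2 u j.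
    have nut := orth_ne ot.
    have h10 := h1; have h20 := h2; have hu0 := hu; expand_all.
    case: (boolP (t \in [:: p;q;r;s;w1;w2])) => ht.
    + move: ht; rewrite !inE; case/or4P => [/eqP et| /eqP et| /eqP et| /orP [/eqP et | /orP [/eqP et | /eqP et]]]; subst t.
      * exists u, w1, w2; split; first by uniq_solve.
        exact: (cn ot (orth_sym H o1)).
      * exists u, w1, w2; split; first by uniq_solve.
        exact: (cn (par_orth H hqp ot) (orth_sym H o1)).
      * exists u, w2, w1; split; first by uniq_solve.
        exact: (cn ot (orth_sym H o2)).
      * exists u, w2, w1; split; first by uniq_solve.
        exact: (cn (par_orth H hsr ot) (orth_sym H o2)).
      * exfalso; apply: (tri hpq (par_sym H (cn ot o1))); ne.
      * exfalso; apply: (tri hrs (par_sym H (cn ot o2))); ne.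
    + exfalso; have ht0 := ht; expand_all.
      have : uniq [:: t;p;q;r;s;w1;w2;u] by uniq_solve.
      by move/uniq7. }
have hee := par_sym H he.
have ex7 := fun y => exhaust [:: p;q;r;s;e1;e2;z] y U7 erefl.
expand_all.
have [v ov] := degG2 z j.
have nzv := orth_ne ov.
have only : forall y, orth j v y -> y = z.
  move=> y oy; have pyz := cn (orth_sym H oy) ov.
  case: (eqVneq y z) => // nyz.
  have := ex7 y.
  rewrite !inE; case/or4P => [/eqP et| /eqP et| /eqP et| /or4P [/eqP et | /eqP et | /eqP et| /eqP et]]; subst y; exfalso;
  try (by rewrite eqxx in nyz);
  first [ apply: (tri hpq pyz); ne | apply: (tri hqp pyz); ne | apply: (tri hrs pyz); ne
        | apply: (tri hsr pyz); ne | apply: (tri he pyz); ne | apply: (tri hee pyz); ne ].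
have [j0 [x [y [nxy oxx oyy]]]] := degA v.
case: (eqVneq j0 j) => [ej|nj].
  subst j0; move: nxy; by rewrite (only x oxx) (only y oyy) eqxx.
have pxy := orth_par H oxx oyy.
have hx := ex7 x.
have hy := ex7 y.
move: hx hy; rewrite !inE.
case/or4P => [/eqP et| /eqP et| /eqP et| /or4P [/eqP et | /eqP et | /eqP et| /eqP et]]; subst x;
case/or4P => [/eqP et| /eqP et| /eqP et| /or4P [/eqP et | /eqP et | /eqP et| /eqP et]]; subst y;
first [ by rewrite eqxx in nxy | apply: (ND pxy hpq); ne | apply: (ND pxy hrs); ne | apply: (ND pxy he); ne ].
Qed.

Lemma twoN {j a a' b c b' c'} : a != a' -> b != c -> orth j a b -> orth j a c ->
  b' != c' -> orth j a' b' -> orth j a' c' -> False.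
Proof.
move=> naa nbc ob oc nbc' ob' oc'.
have nab := orth_ne ob; have nac := orth_ne oc.
have nab' := orth_ne ob'; have nac' := orth_ne oc'.
case: (boolP (par j a a')) => paa.
  apply: (@twodisj j a a' b c); last exact: (orth_par H ob oc); last exact: paa.
  have na'b : a' != b.
    apply/eqP => e; subst b; by have := orth_npar H ob; rewrite paa.
  have na'c : a' != c.
    apply/eqP => e; subst c; by have := orth_npar H oc; rewrite paa.
  uniq_solve.
apply: (@twodisj j b c b' c'); last exact: (orth_par H ob' oc'); last exact: (orth_par H ob oc).
have key : forall x, orth j a x -> orth j a' x -> False.
  move=> x o1 o2; by rewrite (cn o1 o2) in paa.
have n1 : b != b' by apply/eqP => e; subst; exact: (key _ ob ob').
have n2 : b != c' by apply/eqP => e; subst; exact: (key _ ob oc').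
have n3 : c != b' by apply/eqP => e; subst; exact: (key _ oc ob').
have n4 : c != c' by apply/eqP => e; subst; exact: (key _ oc oc').
uniq_solve.
Qed.

Lemma comb : False.
Proof.
pose P j a := [exists b, exists c, (b != c) && orth j a b && orth j a c].
pose g a := odflt ord0 [pick j | P j a].
have gP : forall a, P (g a) a.
  move=> a; rewrite /g; case: pickP => [j //|H0] /=.
  have [j [b [c [nbc ob oc]]]] := degA a.
  have := H0 j; rewrite /P => /existsP; case; exists b; apply/existsP; exists c.
  by rewrite nbc ob oc.
have card : (#|[set: 'I_5]| < #|[set: 'I_7]|)%N by rewrite !cardsT !card_ord.
have [a [a' [_ _ naa ga]]] := @PH _ _ [set: 'I_7] [set: 'I_5] g (fun _ _ => in_setT _) card.
have := gP a; have := gP a'; rewrite -ga.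
move=> /existsP [b' /existsP [c' /andP [/andP [nbc' ob'] oc']]].
move=> /existsP [b /existsP [c /andP [/andP [nbc ob] oc]]].
exact: (twoN naa nbc ob oc nbc' ob' oc').
Qed.
End C.

Set Implicit Arguments. Unset Strict Implicit.
Local Open Scope ring_scope.

Definition i0 : 'I_2 := ord0.
Definition i1 : 'I_2 := ord_max.

Definition li (R : numClosedFieldType) (u w : 'I_2 -> R) : R :=
  (u i0)^* * w i0 + (u i1)^* * w i1.
Arguments li {R}.

Lemma sum2 (R : numClosedFieldType) (F : 'I_2 -> R) : \sum_b F b = F i0 + F i1.
Proof. by rewrite big_ord_recr big_ord1 /=; congr (F _ + F _); apply: val_inj. Qed.

Lemma inner_prodvec (R : numClosedFieldType) p (u w : 'I_p -> 'I_2 -> R) :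
  inner (prodvec u) (prodvec w) = \prod_j li (u j) (w j).
Proof.
rewrite /inner /li.
have -> : \prod_j ((u j i0)^* * w j i0 + (u j i1)^* * w j i1)
   = \prod_j \sum_b (u j b)^* * w j b by apply: eq_bigr => j _; rewrite sum2.
rewrite bigA_distr_bigA /=; apply: eq_bigr => x _.
by rewrite !ffunE rmorph_prod -big_split.
Qed.

Lemma nz_entry (R : numClosedFieldType) (a : 'I_2 -> R) : li a a != 0 -> (a i0 != 0) || (a i1 != 0).
Proof.
move=> h; apply/negPn/negP; rewrite negb_or !negbK => /andP [/eqP a0 /eqP a1].
by move: h; rewrite /li a0 a1 !mulr0 addr0 eqxx.
Qed.

Lemma alg_orth_par (R : numClosedFieldType) (a b c : 'I_2 -> R) :
  li a a != 0 -> li a b = 0 -> li a c = 0 -> b i0 * c i1 = b i1 * c i0.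
Proof.
move=> na hb hc; apply/eqP; rewrite -subr_eq0; apply/eqP.
set D := _ - _.
have e1 : (a i0)^* * D = c i1 * li a b - b i1 * li a c by rewrite /li /D; ring.
have e2 : (a i1)^* * D = - c i0 * li a b + b i0 * li a c by rewrite /li /D; ring.
rewrite hb hc !mulr0 subr0 addr0 in e1 e2.
move/eqP: e1; rewrite mulf_eq0 conjC_eq0 => /orP [a0|/eqP//].
move/eqP: e2; rewrite mulf_eq0 conjC_eq0 => /orP [a1|/eqP//].
by move: (nz_entry na); rewrite a0 a1.
Qed.

Lemma alg_par_orth (R : numClosedFieldType) (a b c : 'I_2 -> R) :
  li b b != 0 -> b i0 * c i1 = b i1 * c i0 -> li a b = 0 -> li a c = 0.
Proof.
move=> nb hp hb.
have e1 : b i0 * li a c = c i0 * li a b + (a i1)^* * (b i0 * c i1 - b i1 * c i0) by rewrite /li; ring.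
have e2 : b i1 * li a c = c i1 * li a b - (a i0)^* * (b i0 * c i1 - b i1 * c i0) by rewrite /li; ring.
rewrite hp hb subrr !mulr0 addr0 subr0 in e1 e2.
move/eqP: e1; rewrite mulf_eq0 => /orP [b0|/eqP//].
move/eqP: e2; rewrite mulf_eq0 => /orP [b1|/eqP//].
by move: (nz_entry nb); rewrite b0 b1.
Qed.

Lemma alg_par_trans (R : numClosedFieldType) (a b c : 'I_2 -> R) :
  li b b != 0 -> a i0 * b i1 = a i1 * b i0 -> b i0 * c i1 = b i1 * c i0 ->
  a i0 * c i1 = a i1 * c i0.
Proof.
move=> nb h1 h2; apply/eqP; rewrite -subr_eq0; apply/eqP.
set X := _ - _.
have e1 : b i0 * X = c i0 * (a i0 * b i1 - a i1 * b i0) + a i0 * (b i0 * c i1 - b i1 * c i0) by rewrite /X; ring.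
have e2 : b i1 * X = a i1 * (b i0 * c i1 - b i1 * c i0) + c i1 * (a i0 * b i1 - a i1 * b i0) by rewrite /X; ring.
rewrite h1 h2 !subrr !mulr0 ?addr0 ?add0r in e1 e2.
move/eqP: e1; rewrite mulf_eq0 => /orP [b0|/eqP//].
move/eqP: e2; rewrite mulf_eq0 => /orP [b1|/eqP//].
by move: (nz_entry nb); rewrite b0 b1.
Qed.

Lemma li_sym (R : numClosedFieldType) (a b : 'I_2 -> R) : li b a = (li a b)^*.
Proof. by rewrite /li rmorphD !rmorphM /= !conjCK [_ * a i0]mulrC [_ * a i1]mulrC. Qed.


Local Open Scope ring_scope.

Lemma inj_into (T U : finType) (A : {set T}) (B : {set U}) (u0 : U) :
  (#|A| <= #|B|)%N -> exists h : T -> U, {in A, forall x, h x \in B} /\ {in A &, injective h}.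
Proof.
move=> le.
exists (fun x => nth u0 (enum B) (index x (enum A))); split.
  move=> x xA; rewrite -mem_enum; apply: mem_nth.
  rewrite -cardE; apply: leq_trans le; rewrite cardE index_mem mem_enum //.
move=> x y xA yA /eqP e.
have ix : (index x (enum A) < size (enum B))%N.
  rewrite -cardE; apply: leq_trans le; rewrite cardE index_mem mem_enum //.
have iy : (index y (enum A) < size (enum B))%N.
  rewrite -cardE; apply: leq_trans le; rewrite cardE index_mem mem_enum //.
rewrite nth_uniq ?enum_uniq // in e.
by have := congr1 (nth x (enum A)) (eqP e); rewrite !nth_index ?mem_enum.
Qed.

Definition porth (R : numClosedFieldType) (u : 'I_7 -> 'I_5 -> 'I_2 -> R) j k k' :=
  li (u k j) (u k' j) == 0.
Definition ppar (R : numClosedFieldType) (u : 'I_7 -> 'I_5 -> 'I_2 -> R) j k k' :=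
  u k j i0 * u k' j i1 == u k j i1 * u k' j i0.

Lemma ppar_refl R u j k : @ppar R u j k k.
Proof. by rewrite /ppar mulrC. Qed.

Lemma ppar_sym R u j a b : @ppar R u j a b -> ppar u j b a.
Proof. move=> /eqP h; apply/eqP; rewrite mulrC [RHS]mulrC; exact/esym. Qed.

Lemma ppar_trans R u j a b c : li (u b j) (u b j) != 0 ->
  @ppar R u j a b -> ppar u j b c -> ppar u j a c.
Proof. move=> nb /eqP h1 /eqP h2; apply/eqP; exact: alg_par_trans nb h1 h2. Qed.

Lemma CH_of (R : numClosedFieldType) (u : 'I_7 -> 'I_5 -> 'I_2 -> R)
  (nz : forall k j, li (u k j) (u k j) != 0)
  (cov : forall k k', k != k' -> exists j, porth u j k k')
  (noext : forall s : 'I_7 -> 'I_5, (forall k k', s k = s k' -> ppar u (s k) k k') -> False) :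
  CH (ppar u) (porth u).
Proof.
constructor.
- exact: ppar_refl.
- exact: ppar_sym.
- move=> j a b /eqP h; by rewrite /porth li_sym h rmorph0.
- move=> j a b c /eqP h1 /eqP h2; apply/eqP; exact: alg_orth_par (nz a j) h1 h2.
- move=> j a b c /eqP hp /eqP hb; apply/eqP; exact: alg_par_orth (nz b j) hp hb.
- move=> j a b /eqP o; apply/negP => p.
  have /eqP hba := ppar_sym p.
  by have := alg_par_orth (nz b j) hba o; move/eqP; rewrite (negbTE (nz a j)).
- exact: cov.
- move=> j a b c nab nac nbc pab pac.
  have pba := ppar_sym pab; have pca := ppar_sym pac.
  have pbc := ppar_trans (nz a j) pba pac; have pcb := ppar_sym pbc.
  have pall : forall x y, x \in [:: a;b;c] -> y \in [:: a;b;c] -> ppar u j x y.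
    move=> x y; rewrite !inE => /or3P [/eqP->|/eqP->|/eqP->] /or3P [/eqP->|/eqP->|/eqP->] //;
    exact: ppar_refl.
  have U3 : uniq [:: a;b;c] by rewrite /= !inE negb_or nab nac nbc.
  have card : (#|[set x | x \notin [:: a;b;c]]| <= #|[set i | i \notin [:: j]]|)%N.
    have U1 : uniq [:: j] by [].
    by rewrite !card_notin (card_uniqP U3) (card_uniqP U1) !card_ord.
  have [h [hB hinj]] := inj_into j card.
  apply: (noext (fun x => if x \in [:: a;b;c] then j else h x)) => k k'.
  case: ifP => hk; case: ifP => hk' e.
  + exact: pall.
  + have := hB k'; rewrite !in_set hk' -e /= => /(_ isT); by rewrite inE eqxx.
  + have := hB k; rewrite !in_set hk e /= => /(_ isT); by rewrite inE eqxx.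
  + rewrite (hinj k k') ?in_set ?hk ?hk' //; exact: ppar_refl.
- move=> j j' a b c d njj nab ncd nac nad nbc nbd pab pcd.
  have pba := ppar_sym pab; have pdc := ppar_sym pcd.
  have U4 : uniq [:: a;b;c;d] by rewrite /= !inE !negb_or nab nac nad nbc nbd ncd.
  have U2 : uniq [:: j;j'] by rewrite /= !inE njj.
  have card : (#|[set x | x \notin [:: a;b;c;d]]| <= #|[set i | i \notin [:: j;j']]|)%N.
    by rewrite !card_notin (card_uniqP U4) (card_uniqP U2) !card_ord.
  have [h [hB hinj]] := inj_into j card.
  apply: (noext (fun x => if x \in [:: a;b] then j else if x \in [:: c;d] then j' else h x)) => k k' /=.
  have hB' : forall x, x \notin [:: a;b] -> x \notin [:: c;d] -> (h x != j) && (h x != j').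
    move=> x h1 h2; have := hB x; rewrite !in_set.
    have -> : x \notin [:: a; b; c; d] by move: h1 h2; rewrite !inE !negb_or => /andP [-> ->] /andP [-> ->].
    by move=> /(_ isT); rewrite !inE negb_or.
  have p1 : forall x y, x \in [:: a;b] -> y \in [:: a;b] -> ppar u j x y.
    move=> x y; rewrite !inE => /orP [/eqP->|/eqP->] /orP [/eqP->|/eqP->] //; exact: ppar_refl.
  have p2 : forall x y, x \in [:: c;d] -> y \in [:: c;d] -> ppar u j' x y.
    move=> x y; rewrite !inE => /orP [/eqP->|/eqP->] /orP [/eqP->|/eqP->] //; exact: ppar_refl.
  have njj' : j' != j by rewrite eq_sym.
  case: (boolP (k \in [:: a;b])) => hk; case: (boolP (k' \in [:: a;b])) => hk'.
  - move=> _; exact: p1.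
  - case: (boolP (k' \in [:: c;d])) => hk2' e.
    + by rewrite e eqxx in njj.
    + by have := hB' k' hk' hk2'; rewrite -e eqxx.
  - case: (boolP (k \in [:: c;d])) => hk2 e.
    + by rewrite e eqxx in njj'.
    + by have := hB' k hk hk2; rewrite e eqxx.
  - case: (boolP (k \in [:: c;d])) => hk2; case: (boolP (k' \in [:: c;d])) => hk2' e.
    + exact: p2.
    + by have := hB' k' hk' hk2'; rewrite -e eqxx andbF.
    + by have := hB' k hk hk2; rewrite e eqxx andbF.
    + rewrite (hinj k k') //; first exact: ppar_refl.
      * by rewrite in_set; move: hk hk2; rewrite !inE !negb_or => /andP [-> ->] /andP [-> ->].
      * by rewrite in_set; move: hk' hk2'; rewrite !inE !negb_or => /andP [-> ->] /andP [-> ->].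
Qed.

Local Close Scope ring_scope.
Unset Implicit Arguments.
Set Strict Implicit.


Theorem mainTheorem11 (R : numClosedFieldType) (S : seq (qvec R 5)) :
  is_UPB S -> size S <> 7%N.
Proof.
case=> uS prodS orthS unext hs.
have memk : forall k : 'I_7, nth 0%R S k \in S by move=> k; apply: mem_nth; rewrite hs.
have exP : forall k : 'I_7, exists V : {ffun 'I_5 -> {ffun 'I_2 -> R}},
    nth 0%R S k == prodvec (fun j b => V j b).
  move=> k; have [[v ->] _] := prodS _ (memk k).
  exists [ffun j => [ffun b => v j b]]; apply/eqP/ffunP => x; rewrite !ffunE.
  by apply: eq_bigr => j _; rewrite !ffunE.
pose u (k : 'I_7) (j : 'I_5) (b : 'I_2) := xchoose (exP k) j b.
have su : forall k : 'I_7, nth 0%R S k = prodvec (u k) := fun k => eqP (xchooseP (exP k)).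
have nz : forall k j, li (u k j) (u k j) != 0%R.
  move=> k j; have := (prodS _ (memk k)).2; rewrite su inner_prodvec => e.
  have : (\prod_j0 li (u k j0) (u k j0) != 0)%R by rewrite e oner_neq0.
  by move/prodf_neq0/(_ j isT).
have cov : forall k k', k != k' -> exists j, porth u j k k'.
  move=> k k' nkk.
  have ne : nth 0%R S k != nth 0%R S k' by rewrite nth_uniq ?hs.
  have := orthS _ _ (memk k) (memk k') ne; rewrite !su inner_prodvec.
  by move=> /eqP /prodf_eq0 [j _ hj]; exists j.
have noext : forall s : 'I_7 -> 'I_5, (forall k k', s k = s k' -> ppar u (s k) k k') -> False.
  move=> sg hsg.
  pose perp (a : 'I_2 -> R) (b : 'I_2) := if b == i0 then (a i1)^*%R else (- (a i0)^*)%R.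
  pose w (j : 'I_5) (b : 'I_2) : R :=
    if [pick k | sg k == j] is Some k then perp (u k j) b else (if b == i0 then 1 else 0)%R.
  have i10 : (i1 == i0) = false by [].
  have wnz : forall j, (w j i0 != 0)%R || (w j i1 != 0)%R.
    move=> j; rewrite /w; case: pickP => [k _|_]; last by rewrite eqxx oner_neq0.
    rewrite /perp eqxx i10 oppr_eq0 !conjC_eq0 orbC; exact: nz_entry (nz k j).
  pose t := prodvec w.
  have orth_all : forall s, s \in S -> inner s t = 0%R.
    move=> s sS; have ik : (index s S < 7)%N by rewrite -hs index_mem.
    have -> : s = nth 0%R S (Ordinal ik) by rewrite /= nth_index.
    rewrite su inner_prodvec (bigD1 (sg (Ordinal ik))) //=.
    set k := Ordinal ik; set j := sg k.
    suff -> : li (u k j) (w j) = 0%R by rewrite GRing.mul0r.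
    rewrite /w; case: pickP => [k0 /eqP hk0 | H0]; last by have := H0 k; rewrite eqxx.
    have /eqP hp := hsg k0 k hk0; rewrite hk0 in hp.
    rewrite /li /perp eqxx i10.
    have -> : ((u k j i0)^* * (u k0 j i1)^* + (u k j i1)^* * - (u k0 j i0)^*
       = (u k0 j i1 * u k j i0 - u k0 j i0 * u k j i1)^*)%R.
      rewrite rmorphB !rmorphM /=; ring.
    by rewrite hp subrr rmorph0.
  have tnz : t != 0%R.
    pose x := [ffun j => if (w j i0 != 0)%R then i0 else i1].
    apply/eqP => t0; move/ffunP/(_ x): t0; rewrite /t /prodvec !ffunE.
    apply/eqP; apply/prodf_neq0 => j _; rewrite ffunE; case: ifP => // h0.
    by have := wnz j; rewrite h0.
  have tnotin : t \notin S.
    apply/negP => tS; have := orth_all t tS; rewrite (prodS t tS).2 => /eqP.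
    by rewrite oner_eq0.
  by apply: (unext t) => //; exists w.
exact: (@comb _ _ (CH_of nz cov noext)).
Qed.
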